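(* Let $\Phi:[0,\infty)\to[0,\infty)$ be nondecreasing with $\Phi(0)=0$, and let $\Psi:[0,\infty)\to[0,\infty)$ be nondecreasing and convex with $\Psi(0)=0$. Let $x=(x_n)$, $y=(y_n)$ be real sequences tending to $0$ such that $x\gtrless y$ and $\sum_{j=1}^\infty\Phi(|y_j|)\le\sum_{j=1}^\infty\Phi(|x_j|)<\infty$. Then \[ \sum_{j=1}^\infty\Psi(\Phi(|x_j|))\ge\sum_{j=1}^\infty\Psi(\Phi(|y_j|)) \] (with values in $[0,\infty]$).
   Context: For a real sequence $x\to0$, $x^*=(x_n^* )$ is the nonincreasing permutation of $(|x_n|)$. $x\gtrless y$ means there is $n_0\in\mathbb N$ with $x_n^*\ge y_n^*$ for $n\le n_0$ and $x_n^*\le y_n^*$ for $n>n_0$. *)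

(* Defs.v *)
From HB Require Import structures.
From mathcomp Require Import all_boot all_order all_algebra.
From mathcomp Require Import all_classical all_reals all_analysis.
Set Implicit Arguments. Unset Strict Implicit. Unset Printing Implicit Defensive.
Import Order.TTheory GRing.Theory Num.Theory.
Import numFieldNormedType.Exports.
Local Open Scope classical_set_scope.
Local Open Scope ring_scope.

(* Nonincreasing rearrangement x^* of (|x_n|), indexed from 0:
   xstar x n = x^*_{n+1} (paper indexing) = inf { t >= 0 : #{j : |x_j| > t} <= n }.
   "#{j : |x_j| > t} <= n" is expressed as: the set is covered by a list of length n. *)
Definition xstar (R : realType) (x : nat -> R) (n : nat) : R :=
  inf [set t : R | 0 <= t /\
         exists s : seq nat, size s = n /\ (forall j, t < `|x j| -> j \in s)].

(* x ≷ y : there is n0 in N = {1,2,...} with x^*_n >= y^*_n for n <= n0 and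
   x^*_n <= y^*_n for n > n0 (shifted to 0-based indexing: n0' = n0 - 1). *)
Definition gtrless (R : realType) (x y : nat -> R) : Prop :=
  exists n0 : nat, forall n : nat,
    ((n <= n0)%N -> xstar y n <= xstar x n) /\
    ((n0 < n)%N -> xstar x n <= xstar y n).

(* Main.v *)
Require Import Defs.
From HB Require Import structures.
From mathcomp Require Import all_boot all_order all_algebra.
From mathcomp Require Import all_classical all_reals all_analysis.
From mathcomp Require Import ring lra.
Import Order.TTheory GRing.Theory Num.Theory.
Import numFieldNormedType.Exports.
Local Open Scope classical_set_scope.
Local Open Scope ring_scope.
Section Rearr.
Variable R : realType.
Implicit Types x : nat -> R.

Lemma eps_bound (x : nat -> R) e : x @ \oo --> 0 -> 0 < e ->
  exists N0, forall n, (N0 <= n)%N -> `|x n| < e.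
Proof. move=> /cvgr0_norm_lt h he; have [N0 _ HN] := h e he; exists N0 => n hn; exact: HN. Qed.

Lemma bound_fin (x : nat -> R) N : exists M, forall j, (j < N)%N -> `|x j| <= M.
Proof.
elim: N => [|N [M HM]]; first by exists 0.
exists (Num.max M `|x N|) => j; rewrite ltnS leq_eqVlt => /orP[/eqP->|hj].
  by rewrite le_max lexx orbT.
by rewrite le_max HM.
Qed.

Lemma bounded_cvg (x : nat -> R) : x @ \oo --> 0 -> exists M, 0 <= M /\ forall j, `|x j| <= M.
Proof.
move=> hx; have [N0 HN0] := eps_bound x 1 hx ltr01.
have [M HM] := bound_fin x N0.
exists (Num.max M 1); split; first by rewrite le_max ler01 orbT.
move=> j; case: (ltnP j N0) => hj; first by rewrite le_max HM.
by rewrite le_max (ltW (HN0 _ hj)) orbT.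
Qed.

Definition xset (x : nat -> R) n := [set t : R | 0 <= t /\
         exists s : seq nat, size s = n /\ (forall j, t < `|x j| -> j \in s)].

Lemma xset_ne x n : x @ \oo --> 0 -> xset x n !=set0.
Proof.
move=> /bounded_cvg [M [M0 HM]]; exists M; split => //; exists (nseq n 0%N).
split; first by rewrite size_nseq.
by move=> j hj; have := HM j; rewrite leNgt hj.
Qed.

Lemma xset_lb x n : has_lbound (xset x n).
Proof. by exists 0 => t [+ _]. Qed.

Lemma xstar_ge0 x n : x @ \oo --> 0 -> 0 <= xstar x n.
Proof. by move=> hx; apply: lb_le_inf; [exact: xset_ne| move=> t [+ _]]. Qed.

Lemma xstar_le x n t : xset x n t -> xstar x n <= t.
Proof. by move=> ht; apply: ge_inf => //; exact: xset_lb. Qed.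

Lemma xstar_nonincr x n : x @ \oo --> 0 -> xstar x n.+1 <= xstar x n.
Proof.
move=> hx; apply: lb_le_inf; first exact: xset_ne.
move=> t [t0 [s [hs hcov]]]; apply: xstar_le; split => //; exists (0%N :: s).
by split; [rewrite /= hs | move=> j /hcov hj; rewrite in_cons hj orbT].
Qed.

Lemma xstar_ge x (L : seq nat) n c : x @ \oo --> 0 -> uniq L -> size L = n.+1 ->
  (forall j, j \in L -> c <= `|x j|) -> c <= xstar x n.
Proof.
move=> hx uL sL hL.
apply: lb_le_inf; first exact: xset_ne.
move=> t [t0 [s [hs hcov]]]; rewrite leNgt; apply/negP => ht.
have : (size L <= size s)%N.
  apply: uniq_leq_size => // j /hL hj; apply: hcov; exact: lt_le_trans hj.
by rewrite hs sL ltnn.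
Qed.

Lemma ex_max (g : nat -> R) (s : seq nat) : s != [::] ->
  exists2 j, j \in s & forall i, i \in s -> g i <= g j.
Proof.
elim: s => [//|a s IH] _; case: s IH => [|b s] IH.
  by exists a => [|i]; rewrite ?mem_seq1 ?eqxx // => /eqP->.
have [j hj hmax] := IH isT.
case: (leP (g a) (g j)) => h.
  exists j; first by rewrite in_cons hj orbT.
  by move=> i; rewrite in_cons => /orP[/eqP->//|/hmax].
exists a; first by rewrite in_cons eqxx.
move=> i; rewrite in_cons => /orP[/eqP->//|/hmax hi]; exact: le_trans hi (ltW h).
Qed.

Lemma ex_min (g : nat -> R) (s : seq nat) : s != [::] ->
  exists2 j, j \in s & forall i, i \in s -> g j <= g i.
Proof.
move=> /(ex_max (fun i => - g i)) [j hj h]; exists j => // i /h; by rewrite lerN2.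
Qed.

Lemma ex_bnd (L : seq nat) : exists M, forall j, j \in L -> (j < M)%N.
Proof.
elim: L => [|a L [M HM]]; first by exists 0%N.
exists (maxn M a.+1) => j; rewrite in_cons => /orP[/eqP->|/HM h].
  by rewrite leq_max leqnn orbT.
by rewrite leq_max h.
Qed.

Lemma sub_sum (F : nat -> R) (L : seq nat) M : uniq L -> (forall j, j \in L -> (j < M)%N) ->
  (forall j, 0 <= F j) -> \sum_(j <- L) F j <= \sum_(0 <= j < M) F j.
Proof.
move=> uL hL F0; rewrite [X in _ <= X](bigID (mem L)) /=.
have -> : \sum_(j <- L) F j = \sum_(0 <= j < M | j \in L) F j.
  rewrite -[in RHS]big_filter. apply: perm_big; apply: uniq_perm => //.
    by rewrite filter_uniq // iota_uniq.
  move=> j; rewrite mem_filter mem_index_iota /=.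
  by case hj: (j \in L) => //=; rewrite (hL _ hj).
by rewrite lerDl sumr_ge0.
Qed.

Lemma ser_cmp (u v : nat -> R) : (forall n, 0 <= u n) -> (forall n, 0 <= v n) ->
 (forall N, exists M, \sum_(0 <= k < N) u k <= \sum_(0 <= j < M) v j) ->
 (\sum_(0 <= k <oo) (u k)%:E <= \sum_(0 <= j <oo) (v j)%:E)%E.
Proof.
move=> u0 v0 h.
have cu : cvgn (fun n => (\sum_(0 <= k < n) (u k)%:E)%E).
  by apply: is_cvg_nneseries => n _ _; rewrite lee_fin.
apply: (lime_le cu); apply: nearW => N /=.
have [M hM] := h N.
apply: le_trans (nneseries_lim_ge M _); last by move=> n _ _; rewrite lee_fin.
by rewrite !sumEFin lee_fin.
Qed.

Section F.
Variable f : R -> R.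
Hypothesis f_mono : forall a b, 0 <= a -> a <= b -> f a <= f b.
Hypothesis f_ge0 : forall a, 0 <= a -> 0 <= f a.

Lemma partB x n (L : seq nat) : x @ \oo --> 0 -> uniq L -> size L = n ->
  \sum_(j <- L) f `|x j| <= \sum_(0 <= k < n) f (xstar x k).
Proof.
move=> hx; elim: n L => [|n IH] L uL sL.
  by move/size0nil: sL => ->; rewrite !big_nil.
have hne : L != [::] by rewrite -size_eq0 sL.
have [jm hjm hmin] := ex_min (fun j => `|x j|) L hne.
rewrite (perm_big (jm :: rem jm L) (perm_to_rem hjm)) big_cons big_nat_recr //= addrC.
apply: lerD.
  apply: IH; first exact: rem_uniq.
  by rewrite size_rem // sL.
apply: f_mono => //; exact: xstar_ge hx uL sL hmin.
Qed.

Lemma ex_max_out x (L : seq nat) : x @ \oo --> 0 ->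
  exists2 j, j \notin L & forall i, i \notin L -> `|x i| <= `|x j|.
Proof.
move=> hx; case: (pselect (exists j, j \notin L /\ 0 < `|x j|)).
  move=> [j0 [hj0 hpos]]; have [N0 HN0] := eps_bound x _ hx hpos.
  set s := [seq i <- iota 0 N0 | i \notin L].
  have j0s : j0 \in s.
    rewrite mem_filter hj0 mem_iota /= add0n; case: (ltnP j0 N0) => // h.
    by have := HN0 _ h; rewrite ltxx.
  have hne : s != [::] by apply/eqP => e; rewrite e in j0s.
  have [j hj hmax] := ex_max (fun i => `|x i|) s hne.
  exists j; first by move: hj; rewrite mem_filter => /andP[].
  move=> i hi; case: (ltnP i N0) => h.
    by apply: hmax; rewrite mem_filter hi mem_iota /= add0n.
  exact: ltW (lt_le_trans (HN0 _ h) (hmax _ j0s)).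
move=> hno; have [M HM] := ex_bnd L.
have hM : M \notin L by apply/negP => /HM; rewrite ltnn.
exists M => // i hi; apply: le_trans (normr_ge0 (x M)).
rewrite leNgt; apply/negP => h; apply: hno; by exists i.
Qed.

Definition top x (L : seq nat) := forall i k, i \in L -> k \notin L -> `|x k| <= `|x i|.

Lemma partA x N : x @ \oo --> 0 -> exists L : seq nat, [/\ uniq L, size L = N, top x L &
  \sum_(0 <= k < N) f (xstar x k) <= \sum_(j <- L) f `|x j|].
Proof.
move=> hx; elim: N => [|N [L [uL sL tL hL]]].
  by exists [::]; split => //; rewrite !big_nil.
have [j hj hmax] := ex_max_out x L hx.
exists (j :: L); split => /=.
- by rewrite hj uL.
- by rewrite sL.
- move=> i k; rewrite !in_cons negb_or => /orP[/eqP->|hi] /andP[hkj hk].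
    exact: hmax.
  exact: tL.
- rewrite big_nat_recr //= big_cons addrC; apply: lerD => //.
  apply: f_mono; first exact: xstar_ge0.
  apply: xstar_le; split => //; exists L; split => // i hi.
  apply/negPn/negP => hiL; have := hmax _ hiL; by rewrite leNgt hi.
Qed.

Lemma serA x : x @ \oo --> 0 ->
  (\sum_(0 <= k <oo) (f (xstar x k))%:E <= \sum_(0 <= j <oo) (f `|x j|)%:E)%E.
Proof.
move=> hx; apply: ser_cmp.
- by move=> n; apply: f_ge0; exact: xstar_ge0.
- by move=> n; apply: f_ge0.
move=> N; have [L [uL sL _ hL]] := partA x N hx.
have [M HM] := ex_bnd L; exists M; apply: le_trans hL _.
by apply: sub_sum => // j; apply: f_ge0.
Qed.

Lemma serB x : x @ \oo --> 0 ->
  (\sum_(0 <= j <oo) (f `|x j|)%:E <= \sum_(0 <= k <oo) (f (xstar x k))%:E)%E.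
Proof.
move=> hx; apply: ser_cmp.
- by move=> n; apply: f_ge0.
- by move=> n; apply: f_ge0; exact: xstar_ge0.
move=> N; exists N.
have := partB x N (iota 0 N) hx (iota_uniq 0 N) (size_iota 0 N).
by rewrite /index_iota subn0.
Qed.

End F.
End Rearr.

Section Tomic.
Variable R : realType.
Variable Psi : R -> R.
Hypothesis Psi_mono : forall a b, 0 <= a -> a <= b -> Psi a <= Psi b.
Hypothesis Psi_convex : forall a b t, 0 <= a -> 0 <= b -> 0 <= t -> t <= 1 ->
      Psi (t * a + (1 - t) * b) <= t * Psi a + (1 - t) * Psi b.

Definition slope (v w : R) := (Psi w - Psi v) / (w - v).

Lemma three_chord p q r : 0 <= p -> p < q -> q < r -> slope p q <= slope q r.
Proof.
move=> p0 pq qr.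
have rp : 0 < r - p by rewrite subr_gt0; exact: lt_trans qr.
have qp : 0 < q - p by rewrite subr_gt0.
have rq : 0 < r - q by rewrite subr_gt0.
set t := (r - q) / (r - p).
have t0 : 0 <= t by rewrite divr_ge0 // ltW.
have t1 : t <= 1 by rewrite ler_pdivrMr // mul1r lerD2l lerN2 ltW.
have ht : t * p + (1 - t) * r = q.
  rewrite /t; field; by rewrite subr_eq0 gt_eqF // (lt_trans pq qr).
have := Psi_convex p r t p0 (le_trans p0 (ltW (lt_trans pq qr))) t0 t1; rewrite ht => H.
have H2 : (r - p) * Psi q <= (r - q) * Psi p + (q - p) * Psi r.
  have -> : (r - q) * Psi p + (q - p) * Psi r = (r - p) * (t * Psi p + (1 - t) * Psi r).
    rewrite /t; field; by rewrite subr_eq0 gt_eqF // (lt_trans pq qr).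
  by rewrite ler_pM2l.
rewrite /slope ler_pdivrMr // mulrAC ler_pdivlMr //.
nra.
Qed.

Definition gset v := [set r | exists2 w, v < w & r = slope v w].
Definition gder v := inf (gset v).

Lemma slope_ge0 v w : 0 <= v -> v < w -> 0 <= slope v w.
Proof.
move=> v0 vw; rewrite /slope divr_ge0 // ?subr_ge0 ?(ltW vw) //.
exact: Psi_mono (ltW vw).
Qed.

Lemma gset_ne v : gset v !=set0.
Proof. by exists (slope v (v + 1)); exists (v + 1); rewrite ?ltrDl. Qed.

Lemma gset_lb v : 0 <= v -> lbound (gset v) 0.
Proof. by move=> v0 r [w vw ->]; exact: slope_ge0. Qed.

Lemma g2 v w : 0 <= v -> v < w -> gder v <= slope v w.
Proof.
move=> v0 vw; apply: ge_inf; first by exists 0; exact: gset_lb.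
by exists w.
Qed.

Lemma g0 v : 0 <= v -> 0 <= gder v.
Proof. by move=> v0; apply: lb_le_inf; [exact: gset_ne | exact: gset_lb]. Qed.

Lemma g3 u v : 0 <= u -> u < v -> slope u v <= gder v.
Proof.
move=> u0 uv; apply: lb_le_inf; first exact: gset_ne.
by move=> r [w vw ->]; exact: three_chord.
Qed.

Lemma g4 v v' : 0 <= v -> v <= v' -> gder v <= gder v'.
Proof.
move=> v0; rewrite le_eqVlt => /orP[/eqP->//|vv'].
apply: le_trans (@g2 v v' v0 vv' : gder v <= slope v v') _; exact: g3.
Qed.

Lemma subgrad u v : 0 <= u -> 0 <= v -> gder v * (u - v) <= Psi u - Psi v.
Proof.
move=> u0 v0; case: (ltgtP u v) => h.
- have := @g3 u v u0 h; rewrite /slope ler_pdivrMr ?subr_gt0 // => H.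
  have -> : gder v * (u - v) = - (gder v * (v - u)) by ring.
  by rewrite lerNl opprB.
- have := @g2 v u v0 h; rewrite /slope ler_pdivlMr ?subr_gt0 //.
- by rewrite h !subrr mulr0.
Qed.

Lemma abel (G d : nat -> R) : (forall n, G n.+1 <= G n) -> (forall n, 0 <= G n) ->
  (forall n, 0 <= \sum_(0 <= k < n) d k) ->
  forall n, G n * \sum_(0 <= k < n) d k <= \sum_(0 <= k < n) G k * d k.
Proof.
move=> Gdec G0 D0; elim => [|n IH]; first by rewrite !big_geq // mulr0.
rewrite !big_nat_recr //=.
have h1 : G n.+1 * (\sum_(0 <= k < n) d k + d n) <= G n * (\sum_(0 <= k < n) d k + d n).
  by rewrite ler_wpM2r // -big_nat_recr.
apply: le_trans h1 _.
by rewrite mulrDr lerD2r.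
Qed.

Lemma tomic (a b : nat -> R) : (forall k, 0 <= a k) -> (forall k, 0 <= b k) ->
  (forall k, b k.+1 <= b k) ->
  (forall m, \sum_(0 <= k < m) b k <= \sum_(0 <= k < m) a k) ->
  forall m, \sum_(0 <= k < m) Psi (b k) <= \sum_(0 <= k < m) Psi (a k).
Proof.
move=> a0 b0 bdec hs m; rewrite -subr_ge0 -sumrB.
have D0 : forall n, 0 <= \sum_(0 <= k < n) (a k - b k) by move=> n; rewrite sumrB subr_ge0.
have hA := @abel (fun k => gder (b k)) (fun k => a k - b k) _ _ D0 m.
have hB : 0 <= gder (b m) * \sum_(0 <= k < m) (a k - b k).
  by apply: mulr_ge0 => //; apply: g0.
apply: le_trans hB _; apply: le_trans (hA _ _) _.
- by move=> n; apply: g4.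
- by move=> n; apply: g0.
by apply: ler_sum => k _; apply: subgrad.
Qed.
End Tomic.


Theorem mainTheorem19 (R : realType) (Phi Psi : R -> R) (x y : nat -> R)
  (Phi0 : Phi 0 = 0)
  (Phi_ge0 : forall a, 0 <= a -> 0 <= Phi a)
  (Phi_mono : forall a b, 0 <= a -> a <= b -> Phi a <= Phi b)
  (Psi0 : Psi 0 = 0)
  (Psi_ge0 : forall a, 0 <= a -> 0 <= Psi a)
  (Psi_mono : forall a b, 0 <= a -> a <= b -> Psi a <= Psi b)
  (Psi_convex : forall a b t, 0 <= a -> 0 <= b -> 0 <= t -> t <= 1 ->
      Psi (t * a + (1 - t) * b) <= t * Psi a + (1 - t) * Psi b)
  (x_cvg : x @ \oo --> 0) (y_cvg : y @ \oo --> 0)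
  (xy : gtrless x y)
  (sum_le : (\sum_(0 <= j <oo) (Phi `|y j|)%:E <= \sum_(0 <= j <oo) (Phi `|x j|)%:E)%E)
  (sum_fin : (\sum_(0 <= j <oo) (Phi `|x j|)%:E < +oo)%E) :
  (\sum_(0 <= j <oo) (Psi (Phi `|y j|))%:E <= \sum_(0 <= j <oo) (Psi (Phi `|x j|))%:E)%E.
Proof.
have f2m : forall a b, 0 <= a -> a <= b -> Psi (Phi a) <= Psi (Phi b).
  move=> a b a0 ab; apply: Psi_mono; [exact: Phi_ge0 | exact: Phi_mono].
have f2g : forall a, 0 <= a -> 0 <= Psi (Phi a).
  by move=> a a0; apply: Psi_ge0; apply: Phi_ge0.
set A := fun k => Phi (xstar x k).
set B := fun k => Phi (xstar y k).
have A0 : forall k, 0 <= A k by move=> k; apply: Phi_ge0; exact: xstar_ge0.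
have B0 : forall k, 0 <= B k by move=> k; apply: Phi_ge0; exact: xstar_ge0.
have hAx := @serA _ _ Phi_mono Phi_ge0 _ x_cvg.
have hBx := @serB _ _ Phi_mono Phi_ge0 _ x_cvg.
have hAy := @serA _ _ Phi_mono Phi_ge0 _ y_cvg.
have hpart : forall m, \sum_(0 <= k < m) B k <= \sum_(0 <= k < m) A k.
  have [n0 Hn0] := xy.
  move=> m; case: (leqP m n0.+1) => hm.
    rewrite big_nat_cond [X in _ <= X]big_nat_cond; apply: ler_sum => k /andP[/andP[_ hk] _].
    apply: Phi_mono; first exact: xstar_ge0.
    by apply: (Hn0 k).1; rewrite -ltnS (leq_trans hk hm).
  rewrite leNgt; apply/negP => hlt.
  set d := \sum_(0 <= k < m) B k - \sum_(0 <= k < m) A k.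
  have d0 : 0 < d by rewrite subr_gt0.
  have SB0 : (0 <= \sum_(0 <= k <oo) (B k)%:E)%E.
    by apply: nneseries_ge0 => n _ _; rewrite lee_fin.
  have SBfin : (\sum_(0 <= k <oo) (B k)%:E)%E \is a fin_num.
    rewrite ge0_fin_numE //; apply: le_lt_trans hAy _; apply: le_lt_trans sum_le _; exact: sum_fin.
  have SA0 : (0 <= \sum_(0 <= k <oo) (A k)%:E)%E.
    by apply: nneseries_ge0 => n _ _; rewrite lee_fin.
  have SAfin : (\sum_(0 <= k <oo) (A k)%:E)%E \is a fin_num.
    rewrite ge0_fin_numE //; apply: le_lt_trans hAx _; exact: sum_fin.
  set b := fine (\sum_(0 <= k <oo) (B k)%:E)%E.
  set a := fine (\sum_(0 <= k <oo) (A k)%:E)%E.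
  have hb : (\sum_(0 <= k <oo) (B k)%:E)%E = b%:E by rewrite fineK.
  have ha : (\sum_(0 <= k <oo) (A k)%:E)%E = a%:E by rewrite fineK.
  have hba : b <= a.
    rewrite -lee_fin -ha -hb; apply: le_trans hAy _; apply: le_trans sum_le _; exact: hBx.
  have hBp : forall M, \sum_(0 <= k < M) B k <= b.
    move=> M; rewrite -lee_fin -hb -sumEFin; apply: nneseries_lim_ge => n _ _; by rewrite lee_fin.
  have hAp : forall M, \sum_(0 <= k < M) A k <= b - d.
    move=> M.
    have e1 : \sum_(0 <= k < M) A k <= \sum_(0 <= k < M + m) A k.
      rewrite (big_cat_nat (leq0n M) (leq_addr m M)) /= lerDl; exact: sumr_ge0.
    apply: le_trans e1 _.
    rewrite (big_cat_nat (leq0n m) (leq_addl M m)) /=.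
    have e2 : \sum_(m <= k < M + m) A k <= \sum_(m <= k < M + m) B k.
      rewrite big_nat_cond [X in _ <= X]big_nat_cond; apply: ler_sum => k /andP[/andP[hk _] _].
      apply: Phi_mono; first exact: xstar_ge0.
      by apply: (Hn0 k).2; apply: leq_trans hk; apply: ltnW.
    have e3 := hBp (M + m).
    rewrite (big_cat_nat (leq0n m) (leq_addl M m)) /= in e3.
    rewrite /d; lra.
  have : (\sum_(0 <= k <oo) (A k)%:E <= (b - d)%:E)%E.
    have cu : cvgn (fun n => (\sum_(0 <= k < n) (A k)%:E)%E).
      by apply: is_cvg_nneseries => n _ _; rewrite lee_fin.
    apply: (lime_le cu); apply: nearW => N /=.
    by rewrite sumEFin lee_fin.
  rewrite ha lee_fin; lra.
have hT := @tomic _ _ Psi_mono Psi_convex _ _ A0 B0.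
have Bdec : forall k, B k.+1 <= B k.
  by move=> k; apply: Phi_mono; [exact: xstar_ge0 | exact: xstar_nonincr].
apply: le_trans (@serB _ _ f2m f2g _ y_cvg) _.
apply: le_trans (@serA _ _ f2m f2g _ x_cvg).
apply: ser_cmp.
- by move=> n; apply: f2g; exact: xstar_ge0.
- by move=> n; apply: f2g; exact: xstar_ge0.
move=> N; exists N; exact: hT Bdec hpart N.
Qed.
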